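(* Let $t\geq 1$ be real with $C(t)>0$. Then $\chi(G)\geq \lfloor t\rfloor+1$.
   Context: Let $G$ be a simple graph with vertex set $V=\{1,\dots,n\}$, edge set $E$, adjacency matrix $A$ and chromatic number $\chi(G)$. Let $e$ denote the all-ones vector, $\langle M,N\rangle=\operatorname{trace}(M^TN)$, and $Y\geq 0$ mean entrywise nonnegativity. For real $t\geq 1$, $P(t)$ is the semidefinite program $$\min \tfrac12\langle A,Y\rangle \ \text{ s.t. } \begin{pmatrix} Y & e\\ e^T & t\end{pmatrix}\succeq 0,\ \operatorname{diag}(Y)=e,\ Y\geq 0,$$ over symmetric $n\times n$ matrices $Y$, and $C(t)$ denotes its optimal value. *)

(* Defs.v *)
From HB Require Import structures.
From mathcomp Require Import all_boot all_order all_algebra.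
From mathcomp Require Import classical_sets reals.
Set Implicit Arguments. Unset Strict Implicit. Unset Printing Implicit Defensive.
Import Order.TTheory GRing.Theory Num.Theory.
Local Open Scope ring_scope.
Local Open Scope classical_set_scope.

Definition simple_graph n (E : rel 'I_n) : Prop :=
  (forall i j, E i j = E j i) /\ (forall i, ~~ E i i).

Definition adjmx (R : realType) n (E : rel 'I_n) : 'M[R]_n :=
  \matrix_(i, j) (E i j)%:R.

Definition psd (R : realType) m (M : 'M[R]_m) : Prop :=
  M^T = M /\ forall x : 'cV[R]_m, 0 <= (x^T *m M *m x) 0 0.

Definition frob (R : realType) n (M N : 'M[R]_n) : R := \tr (M^T *m N).

Definition bordered (R : realType) n (Y : 'M[R]_n) (t : R) : 'M[R]_(n + 1) :=
  block_mx Y (const_mx 1 : 'cV[R]_n) (const_mx 1 : 'rV[R]_n) (t%:M : 'M[R]_1).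

Definition feasible (R : realType) n (t : R) (Y : 'M[R]_n) : Prop :=
  Y^T = Y /\ psd (bordered Y t) /\ (forall i, Y i i = 1) /\
  (forall i j, 0 <= Y i j).

Definition Cval (R : realType) n (E : rel 'I_n) (t : R) : R :=
  inf [set 2^-1 * frob (adjmx R E) Y | Y in [set Y | feasible t Y]].

Definition colorable n (E : rel 'I_n) (k : nat) : bool :=
  [exists f : {ffun 'I_n -> 'I_k}, [forall i, forall j, E i j ==> (f i != f j)]].

Lemma colorable_exists n (E : rel 'I_n) : simple_graph E -> exists k, colorable E k.
Proof.
move=> [_ irr]; exists n; apply/existsP; exists [ffun i => i].
apply/forallP => i; apply/forallP => j; apply/implyP => Eij.
rewrite !ffunE; apply/eqP => eij; subst j; by move: (irr i); rewrite Eij.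
Qed.

Definition chromatic_number n (E : rel 'I_n) (HG : simple_graph E) : nat :=
  ex_minn (colorable_exists HG).

(* Main.v *)
Set Warnings "-notation-overridden,-ambiguous-paths".
Require Import Defs.
From HB Require Import structures.
From mathcomp Require Import all_boot all_order all_algebra.
From mathcomp Require Import classical_sets reals ring lra.
Import Order.TTheory GRing.Theory Num.Theory.
Local Open Scope ring_scope.

Lemma quad (R : realType) n k (f : 'I_n -> 'I_k) (t : R) :
  k%:R <= t ->
  forall x : 'cV[R]_(n+1),
  0 <= (x^T *m bordered (\matrix_(i, j) (f i == f j)%:R) t *m x) 0 0.
Proof.
move=> kt x; rewrite -(vsubmxK x).
set u := usubmx x; set v := dsubmx x.
rewrite tr_col_mx /bordered mul_row_block mul_row_col !mxE.
rewrite !big_ord1 !mxE.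
under eq_bigr => j _ do rewrite !mxE big_ord1 !mxE.
under eq_bigr => j _ do under eq_bigr => i _ do rewrite !mxE.
under [X in _ + (X + _) * _]eq_bigr => j _ do rewrite !mxE mulr1.
have -> : x (rshift n ord0) 0 = v 0 0 by rewrite /v mxE.
rewrite big_ord1 !mxE /= mulr1n.
set w := v 0 0.
set a := fun j => x (lshift 1 j) 0.
rewrite -/(a _).
set S := fun c : 'I_k => \sum_(i | f i == c) a i.
have HS : forall j, \sum_i x (lshift 1 i) 0 * (f i == f j)%:R = S (f j).
  move=> j; rewrite /S [RHS]big_mkcond /=; apply: eq_bigr => i _.
  by case: eqP => _; rewrite ?mulr1 ?mulr0.
have Hw : forall i : 'I_1, x (rshift n i) 0 = w.
  by move=> i; rewrite (ord1 i) /w /v mxE.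
under eq_bigr => j _ do rewrite HS mulr1 Hw.
rewrite !Hw.
have H2 : \sum_j a j = \sum_c S c.
  by rewrite (partition_big f predT) //.
have H1 : \sum_j (S (f j) + w) * a j = \sum_c (S c + w) * S c.
  rewrite (partition_big f predT) //=; apply: eq_bigr => c _.
  rewrite /S mulr_sumr; apply: eq_bigr => j /eqP <-. done.
rewrite H1 H2.
have H : \sum_c (S c + w) ^+ 2 = \sum_c (S c + w) * S c + (\sum_c S c) * w + k%:R * w ^+ 2.
  rewrite mulr_suml -big_split /=.
  have -> : k%:R * w ^+ 2 = \sum_(c < k) w ^+ 2 by rewrite sumr_const card_ord mulr_natl.
  rewrite -big_split /=; apply: eq_bigr => c _; ring.
have -> : \sum_c (S c + w) * S c + (\sum_c S c + w * t) * w
   = \sum_c (S c + w) ^+ 2 + (t - k%:R) * w ^+ 2 by rewrite H; ring.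
apply: addr_ge0; first by apply: sumr_ge0 => c _; exact: sqr_ge0.
apply: mulr_ge0; [by rewrite subr_ge0 | exact: sqr_ge0].
Qed.

Theorem mainTheorem4 (R : realType) (n : nat) (E : rel 'I_n)
  (HG : simple_graph E) (t : R) :
  1 <= t -> 0 < Cval E t ->
  Num.floor t + 1 <= (chromatic_number HG)%:Z.
Proof.
move=> t1 Cpos; rewrite leNgt; apply/negP.
rewrite /chromatic_number; case: ex_minnP => k /existsP [g /forallP Hg] _.
rewrite ltzD1 floor_ge_int => kt.
have kt' : k%:R <= t by [].
pose Y : 'M[R]_n := \matrix_(i, j) (g i == g j)%:R.
have FY : feasible t Y.
  have YT : Y^T = Y by apply/matrixP => i j; rewrite !mxE eq_sym.
  split; first exact: YT.
  split.
    split; first by rewrite /bordered tr_block_mx YT !trmx_const tr_scalar_mx.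
    move=> x; have := @quad _ _ _ (fun i => g i) t kt' x; by [].

  split; first by move=> i; rewrite mxE eqxx.
  by move=> i j; rewrite mxE ler0n.
have F0 : frob (adjmx R E) Y = 0.
  rewrite /frob /mxtrace; apply: big1 => i _; rewrite mxE.
  apply: big1 => j _; rewrite !mxE.
  have := Hg j => /forallP /(_ i); case: (E j i) => /=.
    by move=> /negbTE ->; rewrite mulr0.
  by rewrite mul0r.
have lb : has_lbound [set 2^-1 * frob (adjmx R E) Y0 | Y0 in [set Y0 | feasible t Y0]].
  exists 0 => _ [Y0 [_ [_ [_ Y0ge]]] <-].
  apply: mulr_ge0; first by rewrite invr_ge0 ler0n.
  rewrite /frob /mxtrace; apply: sumr_ge0 => i _; rewrite mxE.
  apply: sumr_ge0 => j _; rewrite !mxE; apply: mulr_ge0 => //; exact: ler0n.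
have := ge_inf lb (ex_intro2 _ _ Y FY erefl).
rewrite F0 mulr0 => Hle.
by move: (lt_le_trans Cpos Hle); rewrite ltxx.
Qed.
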